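(* Let $k,T\in\mathbb{N}$ and let $w\in\{0,1\}^T$ be a characteristic string which violates $k$-slot-CP. Then there exist a decomposition $w=xyz$ with $|y|\ge k+1$ and a fork $\hat F\vdash xy$ such that $\hat F$ is $x$-balanced.
   Context: Characteristic strings and forks. A characteristic string is $w=w_1\dots w_n\in\{0,1\}^n$; index $i$ is honest if $w_i=0$ and adversarial if $w_i=1$. A fork for $w$ is a rooted tree $F=(V,E)$ with edges directed away from the root $r$, together with a labeling $\ell:V\to\{0,\dots,n\}$, such that (F1) $\ell(r)=0$; (F2) labels strictly increase along every directed path; (F3) every honest index is the label of exactly one vertex; (F4) if $i<j$ are honest indices then the vertex labeled $i$ has strictly smaller depth than the vertex labeled $j$. Write $F\vdash w$. A vertex is honest if it is the root or its label is an honest index. A tine is a directed path starting at the root (not necessarily ending at a leaf); its length is its number of edges, $\ell(t)$ is the label of its last vertex, the depth of a vertex is the length of the tine ending at it, and $\mathrm{height}(F)$ is the maximum tine length. A tine $t$ is viable if its length is at least the depth of every honest vertex $v$ with $\ell(v)\le\ell(t)$. The trimmed tine $t^{\lceil k}$ is the portion of $t$ consisting of vertices labeled in $\{0,\dots,\ell(t)-k\}$; $t_1\preceq t_2$ means $t_1$ is a prefix of $t_2$. A fork $F\vdash w$ satisfies $k$-slot-CP if for all pairs of viable tines $t_1,t_2$ with $\ell(t_1)\le\ell(t_2)$ we have $t_1^{\lceil k}\preceq t_2$; $w$ violates $k$-slot-CP if some fork for $w$ does not satisfy it. For $w=xy$, tines $t_1,t_2$ of $F\vdash xy$ are disjoint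 over $y$ (written $t_1\not\sim_x t_2$) if they share no edge terminating at a vertex whose label is an index of $y$ (i.e., a label exceeding $|x|$). A fork $F\vdash xy$ is $x$-balanced if it contains tines $t_1\not\sim_x t_2$ with $\mathrm{length}(t_1)=\mathrm{length}(t_2)=\mathrm{height}(F)$. *)

(* Defs.v *)
From mathcomp Require Import all_boot.
Unset Printing Implicit Defensive.

(* Characteristic strings: w : seq bool, w_i = nth true w i.-1 (1-based),
   [false] = 0 = honest, [true] = 1 = adversarial. *)
Definition honest_idx (w : seq bool) (i : nat) : bool :=
  (0 < i <= size w) && ~~ nth true w i.-1.

(* A finite rooted tree given by a parent map on vertices 'I_nv, together
   with a labeling.  Edges are (par v, v) for v <> root, directed away from
   the root. *)
Record fork := Fork {
  nv   : nat;
  root : 'I_nv;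
  par  : 'I_nv -> 'I_nv;
  lab  : 'I_nv -> nat }.

Section ForkDefs.
Variable F : fork.
Local Notation V := 'I_(nv F).

(* u lies on the tine ending at v (u is an ancestor of v, or u = v). *)
Definition ancestor (u v : V) : Prop := exists j, iter j (par F) v = u.

Definition is_tree : Prop :=
  par F (root F) = root F /\ forall v : V, ancestor (root F) v.

(* depth v = length of the tine ending at v = least j with par^j v = root
   (for a tree, this j is < nv) *)
Definition depth (v : V) : nat :=
  find (fun j => iter j (par F) v == root F) (iota 0 (nv F)).

Definition height : nat := \max_(v : V) depth v.

Definition honest_vertex (w : seq bool) (v : V) : bool :=
  (v == root F) || honest_idx w (lab F v).

Definition is_fork (w : seq bool) : Prop :=
  is_tree /\
  (forall v : V, lab F v <= size w) /\
  lab F (root F) = 0 /\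
  (forall v : V, v != root F -> lab F (par F v) < lab F v) /\
  (forall i, honest_idx w i -> #|[pred v : V | lab F v == i]| = 1) /\
  (forall u v : V, honest_idx w (lab F u) -> honest_idx w (lab F v) ->
     lab F u < lab F v -> depth u < depth v).

(* tines are identified with their terminal vertex *)
Definition viable (w : seq bool) (t : V) : Prop :=
  forall v : V, honest_vertex w v -> lab F v <= lab F t -> depth v <= depth t.

(* t1^{ceil k} is a prefix of t2: every vertex of t1 with label in
   {0,..,lab t1 - k} lies on t2 *)
Definition trim_prefix (k : nat) (t1 t2 : V) : Prop :=
  forall u : V, ancestor u t1 -> lab F u + k <= lab F t1 -> ancestor u t2.

Definition slotCP (k : nat) (w : seq bool) : Prop :=
  forall t1 t2 : V, viable w t1 -> viable w t2 -> lab F t1 <= lab F t2 ->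
    trim_prefix k t1 t2.

(* t1, t2 share no edge terminating at a vertex with label > |x| *)
Definition disjoint_over (lenx : nat) (t1 t2 : V) : Prop :=
  ~ exists u : V, [/\ u != root F, lenx < lab F u, ancestor u t1 & ancestor u t2].

Definition balanced (lenx : nat) : Prop :=
  exists t1 t2 : V, [/\ disjoint_over lenx t1 t2,
                        depth t1 = height & depth t2 = height].
End ForkDefs.

Definition violates_slotCP (k : nat) (w : seq bool) : Prop :=
  exists F : fork, is_fork F w /\ ~ slotCP F k w.

Definition x_balanced (x : seq bool) (F : fork) : Prop := balanced F (size x).

(* Main.v *)
Require Import Defs.
From mathcomp Require Import all_boot zify.
From Stdlib Require Import Classical ClassicalEpsilon.
Set Implicit Arguments. Unset Strict Implicit.

Lemma find_iota_char (P : pred nat) n d : d < n -> P d ->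
  (forall j, j < d -> ~~ P j) -> find P (iota 0 n) = d.
Proof.
move=> dn Pd before.
have hasP : has P (iota 0 n) by apply/hasP; exists d => //; rewrite mem_iota.
have fn : find P (iota 0 n) < n by move: hasP; rewrite has_find size_iota.
have := nth_find 0 hasP; rewrite nth_iota // add0n => Pf.
case: (ltngtP (find P (iota 0 n)) d) => // h.
- by move: (before _ h); rewrite Pf.
- by move: (before_find 0 h); rewrite nth_iota ?add0n ?Pd // (ltn_trans h).
Qed.

Section Tree.
Variable F : fork.
Hypothesis Htree : is_tree F.
Local Notation V := 'I_(nv F).
Local Notation P := (par F).
Local Notation r := (Defs.root F).
Local Notation d := (depth F).

Lemma iter_root j : iter j P r = r.
Proof. elim: j => //= j ->; by case: Htree. Qed.

Lemma depth_spec (v : V) : [/\ iter (d v) P v = r, d v < nv F &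
   forall j, j < d v -> iter j P v != r].
Proof.
have ex : exists j, iter j P v == r.
  by case: Htree => _ /(_ v) [j hj]; exists j; apply/eqP.
case: (ex_minnP ex) => j0 hj0 hmin.
have inj : {in iota 0 j0.+1 &, injective (fun i => iter i P v)}.
  have key : forall i i', i < i' <= j0 -> iter i P v = iter i' P v -> False.
    move=> i i' /andP [ii' i'j] e.
    have : iter (j0 - i' + i) P v == r.
      by rewrite iterD e -iterD subnK.
    move/hmin; rewrite leqNgt => /negP; apply.
    lia.
  move=> i i'; rewrite !mem_iota !add0n /= !ltnS => hi hi' e.
  case: (ltngtP i i') => // h.
  - by case: (key i i' _ e); rewrite h hi'.
  - by case: (key i' i _ (esym e)); rewrite h hi.
have : j0 < nv F.
  have := card_uniqP (etrans (map_inj_in_uniq inj) (iota_uniq 0 j0.+1)).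
  rewrite size_map size_iota => <-.
  have := max_card (mem [seq iter i P v | i <- iota 0 j0.+1]).
  by rewrite card_ord.
move=> lt.
have dv : d v = j0.
  apply: find_iota_char => // j jlt; apply/negP => /hmin; by rewrite leqNgt jlt.
rewrite dv; split => //; first by apply/eqP.
by move=> j jlt; apply/negP => /hmin; rewrite leqNgt jlt.
Qed.

Lemma depth_eq (v : V) j : iter j P v = r -> (forall i, i < j -> iter i P v != r) -> d v = j.
Proof.
move=> e b; case: (depth_spec v) => e' lt b'.
case: (ltngtP (d v) j) => // h.
- by move: (b _ h); rewrite e' eqxx.
- by move: (b' _ h); rewrite e eqxx.
Qed.

Lemma iter_ge (v : V) j : d v <= j -> iter j P v = r.
Proof.
move=> h; case: (depth_spec v) => e _ _.
by rewrite -(subnK h) iterD e iter_root.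
Qed.

Lemma depth_iter (v : V) j : j <= d v -> d (iter j P v) = d v - j.
Proof.
move=> h; case: (depth_spec v) => e _ b.
apply: depth_eq; first by rewrite -iterD subnK.
move=> i ilt; rewrite -iterD; apply: b.
by rewrite -(subnK h) ltn_add2r.
Qed.

Lemma depth_root : d r = 0.
Proof. by apply: depth_eq. Qed.

Lemma depth0 (v : V) : (d v == 0) = (v == r).
Proof.
apply/idP/idP => [/eqP h|/eqP ->]; last by rewrite depth_root.
by case: (depth_spec v) => e _ _; move: e; rewrite h => /= ->.
Qed.

Lemma anc_char (u v : V) : ancestor F u v <-> d u <= d v /\ iter (d v - d u) P v = u.
Proof.
split; last by case=> _ e; exists (d v - d u).
case=> j <-.
case: (leqP j (d v)) => h.
- by rewrite depth_iter // leq_subr subKn.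
- by rewrite iter_ge ?(ltnW h) // depth_root subn0 leq0n iter_ge.
Qed.

Lemma anc_refl (v : V) : ancestor F v v.
Proof. by exists 0. Qed.

Lemma anc_trans (u v x : V) : ancestor F u v -> ancestor F v x -> ancestor F u x.
Proof. by case=> i <- [j <-]; exists (i + j); rewrite iterD. Qed.

Lemma anc_par (v x : V) : ancestor F v x -> ancestor F (P v) x.
Proof. by apply: anc_trans; exists 1. Qed.

Lemma anc_root (v : V) : ancestor F r v.
Proof. by case: Htree. Qed.

Lemma anc_depth (u v : V) : ancestor F u v -> d u <= d v.
Proof. by case/anc_char. Qed.

Lemma anc_cmp (u v x : V) : ancestor F u x -> ancestor F v x -> d u <= d v ->
  ancestor F u v.
Proof.
move=> /anc_char [h1 e1] /anc_char [h2 e2] h; exists (d v - d u).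
set n := d v - d u; rewrite -e2 -iterD -[in RHS]e1; congr iter; rewrite /n; lia.
Qed.

Lemma anc_iter (v : V) j : ancestor F (iter j P v) v.
Proof. by exists j. Qed.

End Tree.

Section ForkL.
Variable F : fork.
Variable w : seq bool.
Hypothesis Hf : is_fork F w.
Local Notation V := 'I_(nv F).
Local Notation P := (par F).
Local Notation r := (Defs.root F).
Local Notation d := (depth F).
Local Notation l := (lab F).

Lemma Htree : is_tree F. Proof. by case: Hf. Qed.
Lemma lab_le (v : V) : l v <= size w. Proof. by case: Hf => _ [H _]; apply: H. Qed.
Lemma lab_root : l r = 0. Proof. by case: Hf => _ [_ [H _]]. Qed.
Lemma lab_par (v : V) : v != r -> l (P v) < l v. Proof. by case: Hf => _ [_ [_ [H _]]]; apply: H. Qed.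
Lemma F3 i : honest_idx w i -> #|[pred v : V | l v == i]| = 1.
Proof. by case: Hf => _ [_ [_ [_ [H _]]]]; apply: H. Qed.
Lemma F4 (u v : V) : honest_idx w (l u) -> honest_idx w (l v) -> l u < l v -> d u < d v.
Proof. by case: Hf => _ [_ [_ [_ [_ H]]]]; apply: H. Qed.

Lemma lab_iter (v : V) j : j <= d v -> l (iter j P v) + j <= l v.
Proof.
elim: j => [|j IH] h; first by rewrite addn0.
have := IH (ltnW h); rewrite iterS.
have : iter j P v != r by case: (depth_spec Htree v) => _ _; apply.
move/lab_par; lia.
Qed.

Lemma lab_anc (u v : V) : ancestor F u v -> l u + (d v - d u) <= l v.
Proof.
move/(anc_char Htree) => [h e]; have := lab_iter (leq_subr (d u) (d v)).
by rewrite e.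
Qed.

Lemma lab_anc_le (u v : V) : ancestor F u v -> l u <= l v.
Proof. move/lab_anc; lia. Qed.

Lemma depth_le_lab (v : V) : d v <= l v.
Proof. have := lab_anc (anc_root Htree v); rewrite lab_root (depth_root Htree) subn0 add0n; lia. Qed.

Lemma nonroot_depth (v : V) : (0 < d v) = (v != r).
Proof. by rewrite lt0n (depth0 Htree). Qed.

Lemma lab_pos_nonroot (v : V) : 0 < l v -> v != r.
Proof. by apply: contraTneq => ->; rewrite lab_root. Qed.

Lemma honest_uniq (u v : V) : honest_idx w (l u) -> l u = l v -> u = v.
Proof.
move=> hu e; have := F3 hu => c.
have : #|[pred x : V | l x == l u]| <= 1 by rewrite c.
move/card_le1P => /(_ u); rewrite inE eqxx => /(_ isT v).
by rewrite inE /= e eqxx => /esym/eqP.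
Qed.

Lemma honest_viable (h : V) : honest_idx w (l h) -> viable F w h.
Proof.
move=> hh v; rewrite /honest_vertex => /orP [/eqP ->|hv] le.
  by rewrite (depth_root Htree).
rewrite leq_eqVlt in le; case/orP: le => [/eqP e|lt].
  by rewrite (honest_uniq hv e).
by apply: ltnW; apply: F4.
Qed.

End ForkL.

Lemma honest_take (w : seq bool) b i : b <= size w -> honest_idx (take b w) i ->
  honest_idx w i /\ i <= b.
Proof.
rewrite /honest_idx => hb /andP [/andP [i0 ib]]; rewrite size_takel // in ib.
rewrite nth_take; last by lia.
move=> hn; rewrite i0 hn ib (leq_trans ib hb); done.
Qed.

Section Construct.
Variable F : fork.
Variable w : seq bool.
Hypothesis Hf : is_fork F w.
Local Notation V := 'I_(nv F).
Local Notation P := (par F).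
Local Notation r := (Defs.root F).
Local Notation d := (depth F).
Local Notation l := (lab F).
Let Ht := Htree Hf.

Variables (a k b : nat) (T1 T2 : V).
Hypotheses (hd : d T1 = d T2) (hd0 : 0 < d T1) (hl1 : l T1 <= b) (hl2 : l T2 <= b)
  (hb : b <= size w) (hab : a + k < b) (ha1 : a < l T1)
  (hdisj : forall c, c != r -> a < l c -> ancestor F c T1 -> ancestor F c T2 -> False)
  (hhon : forall h : V, honest_idx w (l h) -> l h <= b -> d h <= d T1).

Let q := if honest_idx w (l T1) then T2 else T1.

Lemma q_adv : ~~ honest_idx w (l q).
Proof.
rewrite /q; case: ifP => h1; last by rewrite h1.
apply/negP => h2.
have e : l T1 = l T2.
  case: (ltngtP (l T1) (l T2)) => // lt.
  - by have := F4 Hf h1 h2 lt; rewrite hd ltnn.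
  - by have := F4 Hf h2 h1 lt; rewrite hd ltnn.
have eT := honest_uniq Hf h1 e.
apply: (hdisj (c := T1)) => //; first by rewrite -(nonroot_depth Hf).
- exact: anc_refl.
- by rewrite -eT; apply: anc_refl.
Qed.

Lemma q_K : q = T1 \/ q = T2.
Proof. by rewrite /q; case: ifP; auto. Qed.

Let K (v : V) : Prop := (exists h : V, [/\ honest_idx w (l h), l h <= b & ancestor F v h])
  \/ ancestor F v T1 \/ ancestor F v T2.

Lemma KP v : K v -> K (P v).
Proof.
case=> [[h [h1 h2 h3]]|[h|h]]; [left; exists h; split=> // | right; left | right; right];
  exact: anc_par.
Qed.

Lemma Kiter v j : K v -> K (iter j P v).
Proof. by move=> Kv; elim: j => //= j IH; apply: KP. Qed.

Lemma Kr : K r.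
Proof. right; left; exact: anc_root. Qed.

Lemma Kq : K q.
Proof. by case: q_K => ->; [right; left | right; right]; apply: anc_refl. Qed.

Lemma K_depth v : K v -> d v <= d T1.
Proof.
case=> [[h [h1 h2 h3]]|[h|h]].
- exact: leq_trans (anc_depth Ht h3) (hhon h1 h2).
- exact: (anc_depth Ht h).
- by rewrite hd; exact: (anc_depth Ht h).
Qed.

Lemma K_lab v : K v -> l v <= b.
Proof.
case=> [[h [h1 h2 h3]]|[h|h]].
- exact: leq_trans (lab_anc_le Hf h3) h2.
- exact: leq_trans (lab_anc_le Hf h) hl1.
- exact: leq_trans (lab_anc_le Hf h) hl2.
Qed.

Definition par' (v : V) : V := if excluded_middle_informative (K v) then P v else P q.
Definition lab' (v : V) : nat := if excluded_middle_informative (K v) then l v else l q.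

Lemma par'K v : K v -> par' v = P v.
Proof. by rewrite /par'; case: excluded_middle_informative. Qed.
Lemma par'NK v : ~ K v -> par' v = P q.
Proof. by rewrite /par'; case: excluded_middle_informative. Qed.
Lemma lab'K v : K v -> lab' v = l v.
Proof. by rewrite /lab'; case: excluded_middle_informative. Qed.
Lemma lab'NK v : ~ K v -> lab' v = l q.
Proof. by rewrite /lab'; case: excluded_middle_informative. Qed.

Lemma iterK v j : K v -> iter j par' v = iter j P v.
Proof.
move=> Kv; elim: j => //= j ->; apply: par'K; exact: Kiter.
Qed.

Lemma iterNK v j : ~ K v -> iter j.+1 par' v = iter j.+1 P q.
Proof.
move=> nK; rewrite !iterSr par'NK // iterK //; apply: KP; exact: Kq.
Qed.

Definition Fh := @Fork (nv F) (Defs.root F) par' lab'.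

Lemma q_nonroot : q != r.
Proof. by rewrite -(nonroot_depth Hf); case: q_K => ->; rewrite -?hd. Qed.

Lemma depthK v : K v -> depth Fh v = d v.
Proof.
move=> Kv; rewrite /depth /=; apply: eq_find => j /=; by rewrite iterK.
Qed.

Lemma depthNK v : ~ K v -> depth Fh v = d q.
Proof.
move=> nK; rewrite /depth /=; apply: eq_find => [[|j]] /=.
- have vr : v != r by apply: contra_not_neq nK => ->; exact: Kr.
  by rewrite (negbTE vr) (negbTE q_nonroot).
- by rewrite -!iterS iterNK.
Qed.

Lemma depthFh v : depth Fh v <= d T1.
Proof.
case: (classic (K v)) => Kv; first by rewrite depthK //; apply: K_depth.
by rewrite depthNK //; apply: K_depth; exact: Kq.
Qed.

Lemma heightFh : height Fh = d T1.
Proof.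
apply/eqP; rewrite eqn_leq; apply/andP; split.
  by apply/bigmax_leqP => v _; apply: depthFh.
change (d T1 <= \max_(v < nv F) depth Fh v). have := @leq_bigmax _ (fun v : 'I_(nv F) => depth Fh v) T1. rewrite depthK; first by [].
by right; left; exact: anc_refl.
Qed.

Lemma fork_Fh : is_fork Fh (take b w).
Proof.
have hsz : size (take b w) = b by rewrite size_takel.
split; [|split; [|split; [|split; [|split]]]].
- split; first by rewrite /= par'K //; [case: Ht | exact: Kr].
  move=> v /=; case: (classic (K v)) => Kv.
    case: (anc_root Ht v) => j e; exists j; by rewrite iterK.
  case: (anc_root Ht q) => j e; exists j.+1; by rewrite iterNK // iterS e; case: Ht.
- move=> v /=; rewrite hsz /lab'; case: excluded_middle_informative => Kv.
    exact: K_lab.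
  apply: K_lab; exact: Kq.
- by rewrite /= lab'K ?(lab_root Hf) //; exact: Kr.
- move=> v /= vr; case: (classic (K v)) => Kv.
    rewrite par'K // !lab'K //; [exact: (lab_par Hf vr) | exact: KP].
  rewrite par'NK // (lab'NK Kv) lab'K; [exact: (lab_par Hf q_nonroot)|].
  apply: KP; exact: Kq.
- move=> i /(honest_take hb) [hi ib]; rewrite -(F3 Hf hi).
  apply: eq_card => v; rewrite !inE /=.
  case: (classic (K v)) => Kv; first by rewrite lab'K.
  rewrite lab'NK //.
  have -> : (l q == i) = false.
    apply/negP => /eqP e; move: q_adv; by rewrite e hi.
  apply/esym/negP => /eqP e; apply: Kv; left; exists v; split.
  + by rewrite e.
  + by rewrite e.
  + exact: anc_refl.
- move=> u v /=.
  case: (classic (K u)) => Ku; last first.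
    by rewrite lab'NK // => /(honest_take hb) [hq _]; move: q_adv; rewrite hq.
  case: (classic (K v)) => Kv; last first.
    by move=> _; rewrite lab'NK // => /(honest_take hb) [hq _]; move: q_adv; rewrite hq.
  rewrite !lab'K // !depthK // => /(honest_take hb) [h1 _] /(honest_take hb) [h2 _].
  exact: (F4 Hf h1 h2).
Qed.

Lemma construct_goal : exists x y z : seq bool,
    [/\ w = x ++ y ++ z, k.+1 <= size y &
        exists Fh : fork, is_fork Fh (x ++ y) /\ x_balanced x Fh].
Proof.
have hab' : a <= b by lia.
exists (take a w), (drop a (take b w)), (drop b w).
have e : take a w ++ drop a (take b w) = take b w.
  by rewrite -(take_takel _ hab') cat_take_drop.
split.
- by rewrite catA e cat_take_drop.
- rewrite size_drop size_takel //; lia.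
exists Fh; rewrite e; split; first exact: fork_Fh.
rewrite /x_balanced size_takel; last by lia.
exists T1, T2; split; last first.
- by rewrite heightFh hd depthK //; right; right; exact: anc_refl.
- by rewrite heightFh depthK //; right; left; exact: anc_refl.
case=> c [cr ac [j1 e1] [j2 e2]].
have Kc : K c by right; left; exists j1; rewrite -e1 iterK //; right; left; exact: anc_refl.
move: ac; rewrite /= lab'K // => ac.
apply: (hdisj cr ac).
- by exists j1; rewrite -e1 iterK //; right; left; exact: anc_refl.
- by exists j2; rewrite -e2 iterK //; right; right; exact: anc_refl.
Qed.

End Construct.

Section Core.
Variable F : fork.
Variable w : seq bool.
Hypothesis Hf : is_fork F w.
Variables a k : nat.
Local Notation V := 'I_(nv F).
Local Notation P := (par F).
Local Notation r := (Defs.root F).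
Local Notation d := (depth F).
Local Notation l := (lab F).
Let Ht := Htree Hf.

Definition disj (s1 s2 : V) := forall c : V, c != r -> a < l c ->
  ancestor F c s1 -> ancestor F c s2 -> False.

Definition Config (s1 s2 : V) := [/\ viable F w s1, viable F w s2, l s1 <= l s2,
  a + k < l s1 & disj s1 s2].

Definition Goal := exists x y z : seq bool,
    [/\ w = x ++ y ++ z, k.+1 <= size y &
        exists Fh : fork, is_fork Fh (x ++ y) /\ x_balanced x Fh].

Lemma core L (s2 : V) : l s2 = L -> forall e (s1 : V), nv F - d s1 = e ->
  Config s1 s2 -> Goal.
Proof.
elim/ltn_ind: L s2 => L IHL s2 eL e.
elim/ltn_ind: e => e IHe s1 ee [v1 v2 l12 al dj].
have s1r : s1 != r by apply: (lab_pos_nonroot Hf); lia.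
have s2r : s2 != r by apply: (lab_pos_nonroot Hf); lia.
have d1 : 0 < d s1 by rewrite (nonroot_depth Hf).
have d2 : 0 < d s2 by rewrite (nonroot_depth Hf).
case: (leqP (d s2) (d s1)) => hd.
  set s1' := iter (d s1 - d s2) P s1.
  have ds1' : d s1' = d s2 by rewrite /s1' (depth_iter Ht); lia.
  apply: (@construct_goal F w Hf a k (l s2) s2 s1') => //.
  - have := lab_anc_le Hf (anc_iter s1 (d s1 - d s2)); rewrite -/s1'; lia.
  - exact: lab_le Hf s2.
  - lia.
  - lia.
  - move=> c cr ac h2 h1; apply: (dj c cr ac _ h2).
    exact: anc_trans h1 (anc_iter _ _).
  - move=> h hh hl; apply: v2 => //; rewrite /honest_vertex hh orbT //.
set v := iter (d s2 - d s1) P s2.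
have dv : d v = d s1 by rewrite /v (depth_iter Ht); lia.
have av : ancestor F v s2 by exact: anc_iter.
have disjv : forall x : V, ancestor F x s2 -> disj s1 x.
  move=> x ax c cr ac h1 h2; apply: (dj c cr ac h1); exact: anc_trans h2 ax.
have lvs2 : l v < l s2.
  have := lab_anc Hf av; rewrite dv; lia.
case: (leqP (l v) (l s1)) => hlv.
  apply: (@construct_goal F w Hf a k (l s1) s1 v) => //.
  - exact: lab_le Hf s1.
  - lia.
  - exact: disjv.
  - move=> h hh hl; apply: v1 => //; rewrite /honest_vertex hh orbT //.
case: (classic (viable F w v)) => vv.
  apply: (IHL (l v) _ v erefl (nv F - d s1) s1 erefl); first by rewrite -eL.
  split => //; [exact: ltnW | exact: disjv].
have [h hh] : exists h : V, ~ (honest_vertex F w h -> l h <= l v -> d h <= d v).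
  by apply: not_all_ex_not.
have [hv hl hdh] : [/\ honest_vertex F w h, l h <= l v & d v < d h].
  case: (classic (honest_vertex F w h)) => hv; last by case: hh.
  case: (leqP (l h) (l v)) => hl; last by case: hh => _; rewrite leqNgt hl.
  case: (leqP (d h) (d v)) => hdh //; by case: hh.
have hr : h != r by rewrite -(nonroot_depth Hf); lia.
have hhon : honest_idx w (l h) by move: hv; rewrite /honest_vertex (negbTE hr).
have ls1h : l s1 < l h.
  rewrite ltnNge; apply/negP => le; have := v1 h hv le; lia.
have vh : viable F w h by exact: (honest_viable Hf hhon).
case: (classic (disj s1 h)) => dh.
  apply: (IHL (l h) _ h erefl (nv F - d s1) s1 erefl); first by lia.
  by split => //; lia.
have dh2 : disj h s2.
  move=> c2 cr2 a2 c2h c2s2; apply: dh => c1 cr1 a1 c1s1 c1h.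
  case: (leqP (d c1) (d c2)) => hc.
  - apply: (dj c1 cr1 a1 c1s1); apply: anc_trans c2s2; exact: (anc_cmp Ht c1h c2h hc).
  - apply: (dj c2 cr2 a2 _ c2s2); apply: anc_trans c1s1; exact: (anc_cmp Ht c2h c1h (ltnW hc)).
have dhn : d h < nv F by case: (depth_spec Ht h).
apply: (IHe (nv F - d h) _ h erefl); first by lia.
by split => //; lia.
Qed.
End Core.

Unset Implicit Arguments.

Theorem theorem3 (k T : nat) (w : seq bool) :
  size w = T -> violates_slotCP k w ->
  exists x y z : seq bool,
    [/\ w = x ++ y ++ z, k.+1 <= size y &
        exists Fh : fork, is_fork Fh (x ++ y) /\ x_balanced x Fh].
Proof.
move=> _ [F [Hf nCP]].
have Ht := Htree Hf.
apply: NNPP => nG; apply: nCP => t1 t2 v1 v2 le u au lu; apply: NNPP => nau.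
apply: nG.
have ur : u != Defs.root F.
  by apply/negP => /eqP eu; apply: nau; rewrite eu; exact: anc_root.
have lu0 : 0 < lab F u by have := depth_le_lab Hf u; rewrite -(nonroot_depth Hf) in ur; lia.
apply: (@core F w Hf (lab F u - 1) k (lab F t2) t2 erefl (nv F - depth F t1) t1 erefl).
split => //; first lia.
move=> c cr ac ct1 ct2.
case: (leqP (depth F u) (depth F c)) => h.
- by apply: nau; apply: anc_trans ct2; exact: (anc_cmp Ht au ct1 h).
- have := lab_anc Hf (anc_cmp Ht ct1 au (ltnW h)); lia.
Qed.
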